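(* Let $\Gamma$ be a profinite group and let $n\geq 2$ be even. Let $(Z/Z_0,\partial_Z)$ be an oriented $\Gamma$-covering of degree $2$ with $|Z_0|=n$, and for $i=1,2$ put $C_i(Z/Z_0,\partial_Z)=\{\omega\in C(Z/Z_0)\mid \delta(\omega)=\partial_Z(i)\}$. Then $C(Z/Z_0)=C_1(Z/Z_0,\partial_Z)\sqcup C_2(Z/Z_0,\partial_Z)$, each $C_i(Z/Z_0,\partial_Z)$ is a $\Gamma$-stable subset stable under the complementation map $\omega\mapsto Z\setminus\omega$, which is a fixed-point-free involution on it, so that $C_i(Z/Z_0,\partial_Z)$ is a $\Gamma$-covering of degree $2$ of a $\Gamma$-set with $2^{n-2}$ elements (its set of orbits under complementation); these assignments are functorial with respect to isomorphisms of oriented coverings, giving two functors $C_1,C_2$ from the groupoid of oriented degree-$2$ coverings of $n$-element $\Gamma$-sets to the groupoid of degree-$2$ coverings of $2^{n-2}$-element $\Gamma$-sets. Moreover, two sections $\omega,\omega'\in C(Z/Z_0)$ lie in the same set $C_1(Z/Z_0,\partial_Z)$ or $C_2(Z/Z_0,\partial_Z)$ if and only if $|\omega\cap\omega'|\equiv 0\pmod 2$.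
   Context: A (finite) $\Gamma$-set is a finite set with a continuous left action of $\Gamma$. A $\Gamma$-covering of degree $2$ is a $\Gamma$-equivariant map $\pi\colon Z\to Z_0$ of $\Gamma$-sets all of whose fibers have $2$ elements; $\sigma$ denotes the involution of $Z$ swapping the elements of each fiber. $C(Z/Z_0)$ is the $\Gamma$-set of all subsets $\{z_1,\dots,z_n\}\subset Z$ mapping bijectively onto $Z_0$. For a $\Gamma$-set $X$ with $m\ge 2$ elements, $\Delta(X)$ is the two-element $\Gamma$-set of $\mathfrak A_m$-orbits of orderings $(x_1,\dots,x_m)$ of $X$. The map $\delta\colon C(Z/Z_0)\to\Delta(Z)$ sends $\{z_1,\dots,z_n\}$ to the $\mathfrak A_{2n}$-orbit of $(z_1,\dots,z_n,\sigma(z_1),\dots,\sigma(z_n))$. An orientation of $Z$ is an isomorphism of $\Gamma$-sets $\partial_Z\colon\{1,2\}\to\Delta(Z)$, where $\{1,2\}$ has trivial $\Gamma$-action (so $\Gamma$ must act trivially on $\Delta(Z)$); an oriented covering is a pair $(Z/Z_0,\partial_Z)$, and morphisms of oriented coverings are isomorphisms of coverings $f$ compatible with the orientations (i.e. the induced map $\Delta(f)$ carries one orientation to the other). *)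

(* Defs.v *)
From HB Require Import structures.
From mathcomp Require Import boolp classical_sets topology.
From mathcomp Require Import all_boot all_fingroup.

Set Implicit Arguments.
Unset Strict Implicit.
Unset Printing Implicit Defensive.

Record profinite_group (T : topologicalType) := ProfiniteGroup {
  gmul : T -> T -> T;
  ginv : T -> T;
  gone : T;
  gmulA : associative gmul;
  gmul1 : left_id gone gmul;
  gmulV : left_inverse gone ginv gmul;
  gmul_cont : continuous (fun p : T * T => gmul p.1 p.2);
  ginv_cont : continuous ginv;
  g_compact : compact [set: T]%classic;
  g_hausdorff : hausdorff_space T;
  g_totdisc : totally_disconnected [set: T]%classic }.

Section Defs.
Variables (T : topologicalType) (G : profinite_group T).

(* [act] restricted to the subset [A] of the finite type [X] is a continuous
   (= open stabilizers, X discrete) left action of the profinite group G. *)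
Definition gaction_on (X : finType) (act : T -> X -> X) (A : {set X}) :=
  [/\ forall g x, x \in A -> act g x \in A,
      forall x, x \in A -> act (gone G) x = x,
      forall g h x, x \in A -> act (gmul G g h) x = act g (act h x) &
      forall x, x \in A -> open [set g : T | act g x = x]%classic].

Definition covering_on (X Y : finType) (actX : T -> X -> X) (A : {set X})
    (actY : T -> Y -> Y) (B : {set Y}) (p : X -> Y) :=
  [/\ gaction_on actX A, gaction_on actY B,
      forall x, x \in A -> p x \in B,
      forall g x, x \in A -> p (actX g x) = actY g (p x) &
      forall y, y \in B -> #|[set x in A | p x == y]| = 2].

End Defs.

Definition act_set (T : Type) (X : finType) (act : T -> X -> X) (g : T)
  (A : {set X}) : {set X} := act g @: A.

Definition ordering (X : finType) : {set {ffun 'I_#|X| -> X}} :=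
  [set o : {ffun 'I_#|X| -> X} | injectiveb o].

Definition orbitA (X : finType) (o : {ffun 'I_#|X| -> X}) :
    {set {ffun 'I_#|X| -> X}} :=
  [set o' : {ffun 'I_#|X| -> X} | [exists s : 'S_#|X|, ~~ odd_perm s && (o' == [ffun i => o (s i)])]].

Definition Delta (X : finType) : {set {set {ffun 'I_#|X| -> X}}} :=
  [set orbitA o | o in ordering X].

Definition act_ord (T : Type) (X : finType) (act : T -> X -> X) (g : T)
  (o : {ffun 'I_#|X| -> X}) : {ffun 'I_#|X| -> X} := [ffun i => act g (o i)].
Definition act_Delta (T : Type) (X : finType) (act : T -> X -> X) (g : T)
  (D : {set {ffun 'I_#|X| -> X}}) := [set act_ord act g o | o in D].

(* An orientation of Z: an isomorphism of Gamma-sets {1,2} -> Delta(Z),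
   where {1,2} is represented by 'I_2 (index 0 <-> 1, index 1 <-> 2) with
   the trivial action. *)
Definition orientation (T : Type) (Z : finType) (act : T -> Z -> Z)
    (d : 'I_2 -> {set {ffun 'I_#|Z| -> Z}}) :=
  [/\ injective d, [set d i | i : 'I_2] = Delta Z &
      forall g i, act_Delta act g (d i) = d i].

Section Covering.
Variables (Z Z0 : finType) (pi : Z -> Z0).

Definition sigma (z : Z) : Z :=
  odflt z [pick z' | (pi z' == pi z) && (z' != z)].

Definition Csec : {set {set Z}} :=
  [set w : {set Z} | [forall z, forall z',
      ((z \in w) && (z' \in w) && (pi z == pi z')) ==> (z == z')]
    && (pi @: w == [set: Z0])].

(* o is an ordering of the form (z_1,..,z_n, sigma z_1, .., sigma z_n)
   with {z_1,..,z_n} = w, n = #|Z0|. *)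
Definition doubled (w : {set Z}) (o : {ffun 'I_#|Z| -> Z}) : bool :=
  [forall i : 'I_#|Z|, (val i < #|Z0|) ==> (o i \in w)] &&
  [forall i : 'I_#|Z|, forall j : 'I_#|Z|,
      (val j == val i + #|Z0|) ==> (o j == sigma (o i))].

Definition delta (w : {set Z}) : {set {ffun 'I_#|Z| -> Z}} :=
  if [pick o in ordering Z | doubled w o] is Some o then orbitA o else set0.

Definition Ci (d : 'I_2 -> {set {ffun 'I_#|Z| -> Z}}) (i : 'I_2) :
    {set {set Z}} :=
  [set w in Csec | delta w == d i].

Definition Qi (d : 'I_2 -> {set {ffun 'I_#|Z| -> Z}}) (i : 'I_2) :
    {set {set {set Z}}} :=
  [set [set w; ~: w] | w in Ci d i].

End Covering.

Definition oriented_iso (T : Type) (Z Z0 Z' Z0' : finType)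
    (actZ : T -> Z -> Z) (actZ0 : T -> Z0 -> Z0) (pi : Z -> Z0)
    (d : 'I_2 -> {set {ffun 'I_#|Z| -> Z}})
    (actZ' : T -> Z' -> Z') (actZ0' : T -> Z0' -> Z0') (pi' : Z' -> Z0')
    (d' : 'I_2 -> {set {ffun 'I_#|Z'| -> Z'}})
    (f : Z -> Z') (f0 : Z0 -> Z0') :=
  [/\ bijective f, bijective f0,
      forall z, pi' (f z) = f0 (pi z),
      (forall g z, f (actZ g z) = actZ' g (f z)) /\
      (forall g z0, f0 (actZ0 g z0) = actZ0' g (f0 z0)) &
      (* Delta(f) carries d to d' *)
      forall i o, o \in d i -> exists2 o', o' \in d' i &
        forall (j : 'I_#|Z|) (j' : 'I_#|Z'|), val j = val j' -> o' j' = f (o j)].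

(* Main.v *)
Require Import Defs.
From mathcomp Require Import boolp classical_sets topology.
From mathcomp Require Import all_boot all_fingroup.
Set Implicit Arguments.
Unset Strict Implicit.
Unset Printing Implicit Defensive.
Section Top.
Variables (T : topologicalType) (G : profinite_group T).

Lemma lmul_cont (c : T) : continuous (fun y => gmul G c y).
Proof.
move=> y.
have h1 : {for y, continuous (fun y : T => (c, y))}.
  by apply: cvg_pair; [exact: cvg_cst | exact: cvg_id].
have := continuous_comp h1 (@gmul_cont _ G (c, y)).
by [].
Qed.

Lemma act_inj (X : finType) (act : T -> X -> X) (A : {set X}) :
  gaction_on G act A -> forall g x y, x \in A -> y \in A -> act g x = act g y -> x = y.
Proof.
case=> _ H1 HM _ g x y xA yA E.
by rewrite -(H1 x xA) -(H1 y yA) -(gmulV G g) !HM // E.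
Qed.

Lemma open_stab (X : finType) (act : T -> X -> X) (P : T -> Prop) :
  gaction_on G act [set: X] ->
  (forall g h, act g =1 act h -> P g -> P h) ->
  open [set g | P g]%classic.
Proof.
move=> ga HP.
have -> : [set g | P g]%classic =
   (\bigcup_(g in [set g | P g]) [set x | forall z, act x z = act g z])%classic.
  rewrite predeqE => x; split.
    by move=> Px; exists x.
  by case=> g Pg /= E; apply: (HP g) => // z; rewrite E.
apply: bigcup_open => g _.
have -> : [set x | forall z, act x z = act g z]%classic =
   [set x | forall z, z \in enum X -> act x z = act g z]%classic.
  rewrite predeqE => x; split; first by move=> H z _.
  by move=> H z; apply: H; rewrite mem_enum.
elim: (enum X) => [|a s IH].
  have -> : [set x | forall z, z \in [::] -> act x z = act g z]%classic = [set: T]%classic.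
    by rewrite predeqE => x; split.
  exact: openT.
have -> : [set x | forall z, z \in a :: s -> act x z = act g z]%classic =
  ([set x | act x a = act g a] `&` [set x | forall z, z \in s -> act x z = act g z])%classic.
  rewrite predeqE => x; split.
    by move=> H; split; [apply: H; rewrite inE eqxx | move=> z zs; apply: H; rewrite inE zs orbT].
  by case=> Ha Hs z; rewrite inE => /orP[/eqP -> //|]; apply: Hs.
apply: openI => //.
have -> : [set x | act x a = act g a]%classic =
   ((fun x => gmul G (ginv G g) x) @^-1` [set k | act k a = a])%classic.
  rewrite predeqE => x /=; have [_ H1 HM _] := ga; split.
    by move=> E; rewrite HM ?inE // E -HM ?inE // gmulV H1.
  move=> E; apply: (act_inj ga (g := ginv G g)) => //.
  by rewrite -HM ?inE // E -HM ?inE // gmulV H1.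
apply: open_comp; first by move=> x _; exact: lmul_cont.
by case: ga => _ _ _; apply; rewrite inE.
Qed.
End Top.
Section Orb.
Variable X : finType.
Local Notation orbitAX := (@orbitA X).
Local Notation ord := {ffun 'I_#|X| -> X}.
Implicit Types (o : ord) (s t : 'S_#|X|) (D : {set ord}).
Definition ocomp (o : ord) (s : 'S_#|X|) : ord := [ffun i => o (s i)].

Lemma orbitAP (o o' : ord) :
  reflect (exists2 s : 'S_#|X|, ~~ odd_perm s & o' = ocomp o s) (o' \in orbitAX o).
Proof.
rewrite inE; apply: (iffP existsP) => [[s /andP[Hs /eqP E]]|[s Hs E]].
  by exists s.
by exists s; rewrite Hs E eqxx.
Qed.

Lemma ocompM o s t : ocomp (ocomp o s) t = ocomp o (t * s)%g.
Proof. by apply/ffunP => i; rewrite !ffunE permM. Qed.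

Lemma ocomp1 o : ocomp o 1%g = o.
Proof. by apply/ffunP => i; rewrite !ffunE perm1. Qed.

Lemma orbit_refl o : o \in orbitAX o.
Proof. by apply/orbitAP; exists 1%g; rewrite ?odd_perm1 ?ocomp1. Qed.

Lemma orbit_ocomp o s : ~~ odd_perm s -> ocomp o s \in orbitAX o.
Proof. by move=> Hs; apply/orbitAP; exists s. Qed.

Lemma orbit_eq o (o' : ord) : o' \in orbitAX o -> orbitAX o' = orbitAX o.
Proof.
case/orbitAP => s Hs ->; apply/setP => x; apply/orbitAP/orbitAP.
  by case=> t Ht ->; exists (t * s)%g; rewrite ?ocompM // odd_permM (negbTE Hs) (negbTE Ht).
case=> t Ht ->; exists (t * s^-1)%g; last by rewrite ocompM -mulgA mulVg mulg1.
by rewrite odd_permM odd_permV (negbTE Hs) (negbTE Ht).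
Qed.

Lemma orbit_sym o (o' : ord) : o' \in orbitAX o -> o \in orbitAX o'.
Proof. by move/orbit_eq => ->; exact: orbit_refl. Qed.

Lemma orbit_trans o (o' o'' : ord) : o' \in orbitAX o -> o'' \in orbitAX o' -> o'' \in orbitAX o.
Proof. by move/orbit_eq => ->. Qed.

Lemma orbit_odd o s : injective o -> odd_perm s -> orbitAX (ocomp o s) != orbitAX o.
Proof.
move=> io Hs; apply/negP => /eqP E.
have : ocomp o s \in orbitAX o by rewrite -E orbit_refl.
case/orbitAP => t Ht E2.
have st : s = t.
  apply/permP => i; apply: io.
  by have := congr1 (fun f : ord => f i) E2; rewrite !ffunE.
by move: Ht; rewrite -st Hs.
Qed.

Lemma orbit_Delta D o : D \in Delta X -> o \in D -> D = orbitAX o.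
Proof.
case/imsetP => o1 _ -> H; by rewrite (orbit_eq H).
Qed.

Lemma orbit_in_Delta o : o \in ordering X -> orbitAX o \in Delta X.
Proof. by move=> H; apply: imset_f. Qed.

Lemma orderingP (o : ord) : (o \in ordering X) = injectiveb o.
Proof. by rewrite inE. Qed.

End Orb.

Section Pairs.
Variables (U : finType) (c : U -> U).
Hypothesis cK : involutive c.
Hypothesis cn : forall x, c x != x.

Lemma pair_eq x u : u \in [set x; c x] -> [set x; c x] = [set u; c u].
Proof.
by case/set2P => ->; rewrite ?cK // setUC.
Qed.

Lemma card_pairs (A : {set U}) : (forall x, x \in A -> c x \in A) ->
  #|A| = (2 * #|[set [set x; c x] | x in A]|)%N.
Proof.
move=> cA; set P := [set [set x; c x] | x in A].
have hP : partition P A.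
  apply/and3P; split.
  - apply/eqP/setP => u; apply/bigcupP/idP.
      case=> B /imsetP [x xA ->] /set2P [] ->; [exact: xA| exact: cA].
    by move=> uA; exists [set u; c u]; [apply: imset_f | rewrite !inE eqxx].
  - apply/trivIsetP => B1 B2 /imsetP [x _ ->] /imsetP [y _ ->] ne.
    rewrite -setI_eq0; apply/eqP/setP => u; rewrite !inE.
    apply/negP => /andP [h1 h2]; move/negP: ne; apply.
    have h1' : u \in [set x; c x] by rewrite !inE.
    have h2' : u \in [set y; c y] by rewrite !inE.
    by rewrite (pair_eq h1') (pair_eq h2').
  - apply/negP => /imsetP [x _] /setP /(_ x); by rewrite !inE eqxx.
rewrite (card_partition hP) (eq_bigr (fun _ => 2)).
  by rewrite sum_nat_const mulnC.
move=> B /imsetP [x _ ->]; by rewrite cards2 eq_sym cn.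
Qed.
End Pairs.
Section Cov.
Variables (Z Z0 : finType) (pi : Z -> Z0).
Hypothesis Hfib : forall y, #|[set x | pi x == y]| = 2.

Local Notation sg := (sigma pi).
Implicit Types (w : {set Z}).

Lemma sigma_spec z : pi (sg z) = pi z /\ sg z != z.
Proof.
rewrite /sigma; case: pickP => [z' /andP[/eqP -> ->] //| H].
have: [set x | pi x == pi z] \subset [set z].
  apply/subsetP => x; rewrite !inE => Hx; move: (H x); rewrite Hx /=.
  by move/negbT; rewrite negbK.
by move/subset_leq_card; rewrite cards1 Hfib.
Qed.

Lemma sigma_pi z : pi (sg z) = pi z. Proof. by case: (sigma_spec z). Qed.
Lemma sigma_neq z : sg z != z. Proof. by case: (sigma_spec z). Qed.

Lemma fiberE z : [set x | pi x == pi z] = [set z; sg z].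
Proof.
have sub : [set z; sg z] \subset [set x | pi x == pi z].
  by apply/subsetP => x; rewrite !inE => /orP[] /eqP ->; rewrite ?sigma_pi.
have := subset_leqif_cards sub; rewrite Hfib cards2 eq_sym sigma_neq.
by case => _ /esym /eqP.
Qed.

Lemma sigma_uniq z z' : pi z' = pi z -> z' = z \/ z' = sg z.
Proof.
move=> H; have : z' \in [set x | pi x == pi z] by rewrite inE H.
by rewrite fiberE !inE => /orP[] /eqP; auto.
Qed.

Lemma sigmaK z : sg (sg z) = z.
Proof.
have E : pi (sg (sg z)) = pi z by rewrite !sigma_pi.
case: (sigma_uniq E) => // E2; have := sigma_neq (sg z).
by rewrite E2 eqxx.
Qed.

Lemma fiber_ne y : exists x, pi x = y.
Proof.
have : 0 < #|[set x | pi x == y]| by rewrite Hfib.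
by rewrite card_gt0 => /set0Pn [x]; rewrite inE => /eqP; exists x.
Qed.

Lemma sigma_char x y : y != x -> pi y = pi x -> sg x = y.
Proof. by move=> H /sigma_uniq [E|//]; rewrite E eqxx in H. Qed.

Lemma secP w : reflect (forall z, (z \in w) = (sg z \notin w)) (w \in Csec pi).
Proof.
rewrite inE; apply: (iffP andP) => [[/forallP H1 /eqP H2]|H].
  have inj z z' : z \in w -> z' \in w -> pi z = pi z' -> z = z'.
    by move=> a b c; move: (H1 z) => /forallP /(_ z'); rewrite a b c eqxx /= => /eqP.
  move=> z; case zw: (z \in w).
    apply/esym/negP => /(inj _ _ zw) E.
    by have := sigma_neq z; rewrite -(E (esym (sigma_pi z))) eqxx.
  have : pi z \in pi @: w by rewrite H2 inE.
  case/imsetP => z' z'w E; case: (sigma_uniq (esym E)) => E'.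
    by rewrite -E' z'w in zw.
  by rewrite -E' z'w.
split.
  apply/forallP => z; apply/forallP => z'; apply/implyP => /andP[/andP[zw z'w] /eqP E].
  case: (sigma_uniq (esym E)) => [->//|E'].
  by move: zw; rewrite H -E' z'w.
apply/eqP/setP => y; rewrite inE; case: (fiber_ne y) => x <-.
case xw: (x \in w); first by apply: imset_f.
by rewrite -(sigma_pi x); apply: imset_f; move: xw; rewrite H => /negbFE.
Qed.

Lemma sec_sig w z : w \in Csec pi -> (sg z \in w) = (z \notin w).
Proof. by move/secP => H; rewrite (H z) negbK. Qed.

Lemma sec_xor w (P : pred Z0) : w \in Csec pi -> [set x | (x \in w) (+) P (pi x)] \in Csec pi.
Proof.
move/secP => H; apply/secP => z; rewrite !inE sigma_pi H.
by case: (sg z \in w); case: (P (pi z)).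
Qed.

Lemma sec_compl w : w \in Csec pi -> ~: w \in Csec pi.
Proof. by move/secP => H; apply/secP => z; rewrite !inE H negbK. Qed.

Lemma sec_inj w z z' : w \in Csec pi -> z \in w -> z' \in w -> pi z = pi z' -> z = z'.
Proof.
move=> /secP H zw z'w E; case: (sigma_uniq (esym E)) => [->//|E'].
by move: zw; rewrite H -E' z'w.
Qed.

Lemma sec_card w : w \in Csec pi -> #|w| = #|Z0|.
Proof.
move=> ws; have H2 : pi @: w = [set: Z0].
  by move: ws; rewrite inE => /andP[_ /eqP].
rewrite -cardsT -H2 card_in_imset //.
by move=> x y xw yw; apply: (sec_inj ws).
Qed.

Definition w0 : {set Z} := [set x | x == odflt x [pick x' | pi x' == pi x]].

Lemma w0_sec : w0 \in Csec pi.
Proof.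
apply/secP => z; rewrite !inE sigma_pi.
case: pickP => [c /eqP Hc | H]; last by have := H z; rewrite eqxx.
case: (sigma_uniq Hc) => -> /=.
  by rewrite eqxx sigma_neq.
by rewrite eqxx; apply/negbTE; rewrite eq_sym sigma_neq.
Qed.

Lemma card_Z : #|Z| = (#|Z0| + #|Z0|)%N.
Proof.
rewrite -(cardsC w0) (sec_card w0_sec) (sec_card (sec_compl w0_sec)) //.
Qed.

Lemma lt_shN (k : nat) : k < #|Z0| -> k + #|Z0| < #|Z|.
Proof. by rewrite card_Z ltn_add2r. Qed.

Lemma lt_subN (k : nat) : k < #|Z| -> k - #|Z0| < #|Z0|.
Proof.
rewrite card_Z => H; case: (ltnP k #|Z0|) => H2.
  by apply: leq_ltn_trans H2; apply: leq_subr.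
by rewrite ltn_subLR.
Qed.

Definition sh (i : 'I_#|Z|) : 'I_#|Z| := insubd i (i + #|Z0|).

Lemma val_sh (i : 'I_#|Z|) : i < #|Z0| -> val (sh i) = i + #|Z0|.
Proof.
move=> H; rewrite val_insubd.
by rewrite lt_shN.
Qed.

Lemma doubledP w (o : {ffun 'I_#|Z| -> Z}) :
  reflect ((forall i : 'I_#|Z|, i < #|Z0| -> o i \in w) /\
           (forall i : 'I_#|Z|, i < #|Z0| -> o (sh i) = sg (o i)))
          (doubled pi w o).
Proof.
apply: (iffP andP) => [[/forallP H1 /forallP H2]|[H1 H2]]; split.
- by move=> i Hi; move: (H1 i); rewrite Hi.
- move=> i Hi; move: (H2 i) => /forallP /(_ (sh i)).
  by rewrite val_sh // eqxx /= => /eqP.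
- by apply/forallP => i; apply/implyP; apply: H1.
apply/forallP => i; apply/forallP => j; apply/implyP => /eqP E.
have Hi : i < #|Z0|.
  by have := ltn_ord j; rewrite E => /lt_subN; rewrite addnK.
have -> : j = sh i by apply: val_inj; rewrite val_sh.
by rewrite H2.
Qed.

Lemma ord_bij (o : {ffun 'I_#|Z| -> Z}) : o \in ordering Z -> bijective o.
Proof.
rewrite inE => /injectiveP io; apply: inj_card_bij => //.
by rewrite card_ord.
Qed.

Lemma dbl_onto w (o : {ffun 'I_#|Z| -> Z}) z :
  w \in Csec pi -> o \in ordering Z -> doubled pi w o -> z \in w ->
  exists2 j : 'I_#|Z|, j < #|Z0| & o j = z.
Proof.
move=> ws oo /doubledP [H1 H2] zw.
have [g og go] := ord_bij oo.
case: (ltnP (g z) #|Z0|) => Hj; first by exists (g z).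
have Hi : g z - #|Z0| < #|Z|.
  by apply: leq_ltn_trans (ltn_ord (g z)); apply: leq_subr.
set i := Ordinal Hi.
have Hi' : i < #|Z0| by exact: lt_subN.
have E : sh i = g z by apply: val_inj; rewrite val_sh //= subnK.
have := H2 i Hi'; rewrite E go => E2.
by move: zw; rewrite E2 (sec_sig _ ws) H1.
Qed.

Lemma dbl_exists w (z0 : Z) : w \in Csec pi ->
  exists2 o, o \in ordering Z & doubled pi w o.
Proof.
move=> ws; set e := enum w.
have se : size e = #|Z0| by rewrite /e -cardE sec_card.
have ue : uniq e by rewrite /e enum_uniq.
have ine k : k < #|Z0| -> nth z0 e k \in w.
  by move=> Hk; rewrite -mem_enum -/e mem_nth // se.
pose o := [ffun i : 'I_#|Z| => if i < #|Z0| then nth z0 e i else sg (nth z0 e (i - #|Z0|))].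
have ltM (i : 'I_#|Z|) : i - #|Z0| < #|Z0|.
  exact: lt_subN.
exists o.
  rewrite inE; apply/injectiveP => i j; rewrite !ffunE.
  case: (ltnP i #|Z0|) => Hi; case: (ltnP j #|Z0|) => Hj.
  - move/eqP; rewrite nth_uniq ?se // => /eqP E; exact: val_inj.
  - by move=> E; have := ine _ Hi; rewrite E (sec_sig _ ws) ine ?ltM.
  - by move=> E; have := ine _ Hj; rewrite -E (sec_sig _ ws) ine ?ltM.
  - move=> E; have := congr1 sg E; rewrite !sigmaK => /eqP.
    rewrite nth_uniq ?se ?ltM //.
    move/eqP => E2; apply: val_inj => /=.
    by rewrite -(subnK Hi) -(subnK Hj) E2.
apply/doubledP; split.
  by move=> i Hi; rewrite ffunE Hi ine.
move=> i Hi; rewrite !ffunE val_sh // Hi ltnNge leq_addl /= addnK //.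
Qed.

Lemma sh_eq (a b : 'I_#|Z|) : a < #|Z0| -> b < #|Z0| -> (sh a == sh b) = (a == b).
Proof.
move=> Ha Hb; apply/eqP/eqP => [E|->//]; apply: val_inj.
by have := congr1 val E; rewrite !val_sh // => /addIn.
Qed.

Lemma sh_low (a b : 'I_#|Z|) : a < #|Z0| -> b < #|Z0| -> (sh a == b) = false.
Proof.
move=> Ha Hb; apply/negbTE/eqP => E.
by have := congr1 val E; rewrite val_sh // => E2; move: Hb; rewrite -E2 ltnNge leq_addl.
Qed.

Lemma tperm_low (a b k : 'I_#|Z|) : a < #|Z0| -> b < #|Z0| -> k < #|Z0| ->
  tperm (sh a) (sh b) k = k /\ tperm a b (sh k) = sh k.
Proof.
move=> Ha Hb Hk; split; apply: tpermD; rewrite ?sh_low //.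
- by rewrite eq_sym sh_low.
- by rewrite eq_sym sh_low.
Qed.

Lemma tperm_low1 (a b k : 'I_#|Z|) : a < #|Z0| -> b < #|Z0| -> k < #|Z0| ->
  tperm (sh a) (sh b) k = k.
Proof. by move=> Ha Hb Hk; case: (tperm_low Ha Hb Hk). Qed.

Lemma tperm_low2 (a b k : 'I_#|Z|) : a < #|Z0| -> b < #|Z0| -> k < #|Z0| ->
  tperm a b (sh k) = sh k.
Proof. by move=> Ha Hb Hk; case: (tperm_low Ha Hb Hk). Qed.

Lemma tperm_sh (a b k : 'I_#|Z|) : a < #|Z0| -> b < #|Z0| -> k < #|Z0| ->
  tperm (sh a) (sh b) (sh k) = sh (tperm a b k).
Proof.
move=> Ha Hb Hk; case: (tpermP a b k) => [->|->|na nb].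
- by rewrite tpermL.
- by rewrite tpermR.
apply: tpermD; rewrite sh_eq //; apply/eqP => E; [exact: na | exact: nb].
Qed.

Lemma tperm_lt (a b k : 'I_#|Z|) : a < #|Z0| -> b < #|Z0| -> k < #|Z0| ->
  tperm a b k < #|Z0|.
Proof. by move=> Ha Hb Hk; case: (tpermP a b k). Qed.

Lemma ordering_inj (o : {ffun 'I_#|Z| -> Z}) : o \in ordering Z -> injective o.
Proof. by rewrite inE => /injectiveP. Qed.

Lemma dbl_agree w (o1 o2 : {ffun 'I_#|Z| -> Z}) : doubled pi w o1 -> doubled pi w o2 ->
  (forall i : 'I_#|Z|, i < #|Z0| -> o1 i = o2 i) -> o1 = o2.
Proof.
move=> /doubledP [_ D1] /doubledP [_ D2] H; apply/ffunP => j.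
case: (ltnP j #|Z0|) => Hj; first by rewrite H.
have Hi : j - #|Z0| < #|Z| by apply: leq_ltn_trans (ltn_ord j); apply: leq_subr.
have Hi' : Ordinal Hi < #|Z0| by apply: lt_subN.
have -> : j = sh (Ordinal Hi) by apply: val_inj; rewrite val_sh //= subnK.
by rewrite D1 // D2 // H.
Qed.

Lemma dbl_orbit w (o1 o2 : {ffun 'I_#|Z| -> Z}) : w \in Csec pi ->
  o1 \in ordering Z -> doubled pi w o1 ->
  o2 \in ordering Z -> doubled pi w o2 -> o2 \in orbitA o1.
Proof.
move=> ws oo1 d1.
pose S (o : {ffun 'I_#|Z| -> Z}) := [set i : 'I_#|Z| | (i < #|Z0|) && (o1 i != o i)].
have [k Hk] : exists k, #|S o2| <= k by exists #|S o2|.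
elim: k o2 Hk => [|k IH] o2 Hk oo2 d2.
  have E : o1 = o2.
    apply: (dbl_agree d1 d2) => i Hi; apply/eqP; apply: contraT => ne.
    have : i \in S o2 by rewrite inE Hi ne.
    by move: Hk; rewrite leqn0 cards_eq0 => /eqP ->; rewrite inE.
  by rewrite -E orbit_refl.
have [E|[i]] := set_0Vmem (S o2).
  have E2 : o1 = o2.
    apply: (dbl_agree d1 d2) => i Hi; apply/eqP; apply: contraT => ne.
    have : i \in S o2 by rewrite inE Hi ne.
    by rewrite E inE.
  by rewrite -E2 orbit_refl.
rewrite inE => /andP[Hi ne].
have io1 := ordering_inj oo1; have io2 := ordering_inj oo2.
have [D1a D1b] := doubledP _ _ d1; have [D2a D2b] := doubledP _ _ d2.
have [j Hj E] := dbl_onto ws oo2 d2 (D1a i Hi).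
have nij : i != j by apply/eqP => eij; move: ne; rewrite -E eij eqxx.
pose t := (tperm i j * tperm (sh i) (sh j))%g.
have teq m : t m = tperm (sh i) (sh j) (tperm i j m) by rewrite permM.
have tlt (m : 'I_#|Z|) : m < #|Z0| -> t m < #|Z0|.
  by move=> Hm; rewrite teq (tperm_low1 (k := tperm i j m)) ?tperm_lt.
have tsh (m : 'I_#|Z|) : m < #|Z0| -> t (sh m) = sh (t m).
  move=> Hm; rewrite !teq (tperm_low2 (k := m)) // tperm_sh //.
  by rewrite (tperm_low1 (k := tperm i j m)) ?tperm_lt.
have teven : ~~ odd_perm t.
  by rewrite odd_permM !odd_tperm sh_eq // nij.
pose o2' := ocomp o2 t.
have oo2' : o2' \in ordering Z.
  by rewrite inE; apply/injectiveP => a b; rewrite !ffunE => /io2 /perm_inj.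
have d2' : doubled pi w o2'.
  apply/doubledP; split => m Hm; rewrite !ffunE ?D2a ?tlt //.
  by rewrite tsh // D2b ?tlt.
have sub : S o2' \subset S o2 :\ i.
  apply/subsetP => x; rewrite !inE /o2' ffunE => /andP[Hx nx].
  rewrite Hx /=; case: (eqVneq x i) => [exi|nxi].
    by move: nx; rewrite exi teq tpermL (tperm_low1 (k := j)) // E eqxx.
  case: (eqVneq x j) => [exj|nxj].
    by rewrite exj E; apply/negP => /eqP /io1 /eqP; rewrite eq_sym (negbTE nij).
  move: nx; rewrite teq [tperm i j x]tpermD 1?eq_sym // (tperm_low1 (k := x)) //.
  by rewrite eq_sym.
have Hk' : #|S o2'| <= k.
  apply: leq_trans (subset_leq_card sub) _.
  have := cardsD1 i (S o2); rewrite inE Hi ne /= add1n => E3.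
  by move: Hk; rewrite E3 ltnS.
have := IH _ Hk' oo2' d2'.
move=> H; apply: orbit_trans H _.
apply: orbit_sym; exact: orbit_ocomp.
Qed.

Lemma delta_dbl w (o : {ffun 'I_#|Z| -> Z}) : w \in Csec pi ->
  o \in ordering Z -> doubled pi w o -> delta pi w = orbitA o.
Proof.
move=> ws oo d; rewrite /delta; case: pickP => [o1 /andP[oo1 d1]|H].
  by rewrite (orbit_eq (dbl_orbit ws oo1 d1 oo d)).
by have := H o; rewrite oo d.
Qed.

Lemma delta_Delta w (z0 : Z) : w \in Csec pi -> delta pi w \in Delta Z.
Proof.
move=> ws; have [o oo d] := dbl_exists z0 ws.
by rewrite (delta_dbl ws oo d) orbit_in_Delta.
Qed.

Definition flipy w (y : Z0) : {set Z} := [set x | (x \in w) (+) (pi x == y)].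

Lemma flip_sec w y : w \in Csec pi -> flipy w y \in Csec pi.
Proof. by move=> ws; exact: (sec_xor (fun y0 : Z0 => y0 == y) ws). Qed.

Lemma dbl_flip w (o : {ffun 'I_#|Z| -> Z}) (i : 'I_#|Z|) : w \in Csec pi ->
  o \in ordering Z -> doubled pi w o -> i < #|Z0| ->
  ocomp o (tperm i (sh i)) \in ordering Z /\
  doubled pi (flipy w (pi (o i))) (ocomp o (tperm i (sh i))).
Proof.
move=> ws oo d Hi; have io := ordering_inj oo.
have [Da Db] := doubledP _ _ d.
split.
  by rewrite inE; apply/injectiveP => a b; rewrite !ffunE => /io /perm_inj.
apply/doubledP; split => m Hm; rewrite !ffunE.
  case: (eqVneq m i) => [->|nmi].
    rewrite tpermL Db // inE sigma_pi eqxx (sec_sig _ ws) Da //.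
  rewrite tpermD ?sh_low // 1?eq_sym // inE Da //=.
  apply/negP => /eqP E; move: nmi; rewrite (io _ _ (sec_inj ws (Da _ Hm) (Da _ Hi) E)).
  by rewrite eqxx.
case: (eqVneq m i) => [->|nmi].
  by rewrite tpermR tpermL Db // sigmaK.
rewrite tpermD ?sh_eq // 1?eq_sym ?sh_low //.
by rewrite tpermD ?sh_low // 1?eq_sym // Db.
Qed.

Lemma delta_flip w z : w \in Csec pi -> delta pi (flipy w (pi z)) != delta pi w.
Proof.
move=> ws; have [o oo d] := dbl_exists z ws.
pose u := if z \in w then z else sg z.
have uw : u \in w by rewrite /u; case: ifP => // /negbT; rewrite -(sec_sig _ ws).
have pu : pi u = pi z by rewrite /u; case: ifP => //; rewrite sigma_pi.
have [i Hi E] := dbl_onto ws oo d uw.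
have [oo' d'] := dbl_flip ws oo d Hi.
rewrite -pu -E (delta_dbl ws oo d) (delta_dbl (flip_sec _ ws) oo' d').
apply: orbit_odd; first exact: ordering_inj.
by rewrite odd_tperm eq_sym sh_low.
Qed.

Lemma three_vals (D : finType) (d0 d1 a b c : D) : a \in [set d0; d1] ->
  b \in [set d0; d1] -> c \in [set d0; d1] -> b != c -> (a == b) = ~~ (a == c).
Proof.
move=> Ha Hb Hc bc; case: (eqVneq a b) => [eab|nab]; first by rewrite -eab in bc; rewrite bc.
move: Ha Hb Hc nab bc; rewrite !inE => /orP[]/eqP-> /orP[]/eqP-> /orP[]/eqP->;
  rewrite ?eqxx //= => H1 H2; by rewrite ?(negbTE H1) ?(negbTE H2) // eq_sym ?(negbTE H1) ?(negbTE H2).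
Qed.

Lemma parity (d0 d1 : {set {ffun 'I_#|Z| -> Z}}) (z0 : Z) :
  Delta Z \subset [set d0; d1] -> forall k w w', #|w :\: w'| = k ->
  w \in Csec pi -> w' \in Csec pi -> (delta pi w == delta pi w') = ~~ odd k.
Proof.
move=> HD; elim=> [|k IH] w w' Hk ws ws'.
  have : w \subset w' by rewrite -setD_eq0 -cards_eq0 Hk.
  move=> sub; have -> : w = w'.
    by apply/eqP; rewrite eqEcard sub /= (sec_card ws) (sec_card ws') leqnn.
  by rewrite eqxx.
have [E|[z]] := set_0Vmem (w :\: w'); first by rewrite E cards0 in Hk.
rewrite inE => /andP[zw' zw].
have ws'' := flip_sec (pi z) ws'.
have Hk'' : #|w :\: flipy w' (pi z)| = k.
  have -> : w :\: flipy w' (pi z) = (w :\: w') :\ z.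
    apply/setP => x; rewrite !inE; case: (eqVneq (pi x) (pi z)) => [E|NE].
      case: (sigma_uniq E) => ->; first by rewrite eqxx (negbTE zw') zw.
      by rewrite (sec_sig _ ws) zw /= !andbF.
    have nxz : x != z by apply: contraNneq NE => ->.
    by rewrite nxz /= addbF.
  by have := cardsD1 z (w :\: w'); rewrite Hk inE zw zw' add1n => -[].
have := IH _ _ Hk'' ws ws''.
rewrite (@three_vals _ d0 d1 (delta pi w) (delta pi w') (delta pi (flipy w' (pi z)))).
- by move=> ->; rewrite oddS.
- by apply: (subsetP HD); apply: delta_Delta.
- by apply: (subsetP HD); apply: delta_Delta.
- by apply: (subsetP HD); apply: delta_Delta.
by rewrite eq_sym delta_flip.
Qed.

Definition Phi (S : {set Z0}) : {set Z} := [set x | (x \in w0) (+) (pi x \in S)].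

Lemma card_Csec : #|Csec pi| = 2 ^ #|Z0|.
Proof.
have Phi_inj : injective Phi.
  move=> S S' E; apply/setP => y; case: (fiber_ne y) => x <-.
  have := congr1 (fun A : {set Z} => x \in A) E; rewrite /Phi !inE.
  by move/addbI.
have -> : Csec pi = Phi @: powerset [set: Z0].
  apply/setP => w; apply/idP/imsetP => [ws|[S _ ->]]; last first.
    exact: (sec_xor (fun y => y \in S) w0_sec).
  exists (pi @: (w :\: w0)); first by rewrite powersetE subsetT.
  apply/setP => x; rewrite inE.
  have -> : (pi x \in pi @: (w :\: w0)) = (x \in w) (+) (x \in w0).
    apply/imsetP/idP => [[x' /setDP [x'w x'w0] E]|].
      case: (sigma_uniq (esym E)) => E'; first by rewrite -E' x'w (negbTE x'w0).
      move: x'w x'w0; rewrite E' (sec_sig _ ws) (sec_sig _ w0_sec).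
      by move=> /negbTE -> /negbNE ->.
    case xw: (x \in w) => /= H.
      by exists x => //; rewrite inE xw (negbTE H).
    exists (sg x); last by rewrite sigma_pi.
    by rewrite inE (sec_sig _ ws) (sec_sig _ w0_sec) xw H.
  by case: (x \in w); case: (x \in w0).
by rewrite card_imset // card_powerset cardsT.
Qed.

Lemma flipK w y : flipy (flipy w y) y = w.
Proof. by apply/setP => x; rewrite !inE; case: (x \in w); case: (pi x == y). Qed.

Lemma card_C (d0 d1 : {set {ffun 'I_#|Z| -> Z}}) (z0 : Z) :
  d0 != d1 -> Delta Z \subset [set d0; d1] ->
  (2 * #|[set w in Csec pi | delta pi w == d0]| = 2 ^ #|Z0|)%N /\
  (2 * #|[set w in Csec pi | delta pi w == d1]| = 2 ^ #|Z0|)%N.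
Proof.
move=> nd HD.
have Dv w : w \in Csec pi -> (delta pi w == d0) || (delta pi w == d1).
  by move=> ws; have := subsetP HD _ (delta_Delta z0 ws); rewrite !inE.
set F := fun w => flipy w (pi z0).
have Finj : injective F.
  move=> a b E; rewrite -(flipK a (pi z0)) -(flipK b (pi z0)).
  exact: (congr1 (fun A => flipy A (pi z0)) E).
have le01 (e0 e1 : {set {ffun 'I_#|Z| -> Z}}) : e0 != e1 -> Delta Z \subset [set e0; e1] ->
    #|[set w in Csec pi | delta pi w == e0]| <= #|[set w in Csec pi | delta pi w == e1]|.
  move=> ne HD'; rewrite -(card_imset _ Finj); apply: subset_leq_card.
  apply/subsetP => w' /imsetP [w]; rewrite inE => /andP [ws /eqP E] ->.
  rewrite inE flip_sec //=.
  have h := delta_flip z0 ws.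
  have m1 := subsetP HD' _ (delta_Delta z0 (flip_sec (pi z0) ws)).
  have m2 := subsetP HD' _ (delta_Delta z0 ws).
  move: h m1 m2; rewrite E !inE => h /orP[]/eqP E2 _; last by rewrite E2 eqxx.
  by rewrite E2 eqxx in h.
have eqc : #|[set w in Csec pi | delta pi w == d0]| = #|[set w in Csec pi | delta pi w == d1]|.
  apply/eqP; rewrite eqn_leq !le01 //; first by rewrite eq_sym.
  by rewrite setUC.
have tot : (#|[set w in Csec pi | delta pi w == d0]| + #|[set w in Csec pi | delta pi w == d1]| = #|Csec pi|)%N.
  move: (Csec pi) Dv => CS Dv.
  rewrite -(cardsID [set w | delta pi w == d0] CS); congr (_ + _)%N.
    by apply: eq_card => w; rewrite !inE andbC.
  apply: eq_card => w; rewrite !inE.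
  case ws: (w \in CS); rewrite ?andbF ?andbT ?andFb ?andTb //=.
  have := Dv w ws; case: (eqVneq (delta pi w) d0) => [->|ne] /=.
    by rewrite (negbTE nd).
  by move=> ->.
by rewrite -card_Csec -tot -eqc mul2n addnn; split => //; rewrite eqc.
Qed.
End Cov.

Section Trans.
Variables (Z Z0 Z' Z0' : finType) (pi : Z -> Z0) (pi' : Z' -> Z0').
Hypothesis Hfib : forall y, #|[set x | pi x == y]| = 2.
Hypothesis Hfib' : forall y, #|[set x | pi' x == y]| = 2.
Variables (h : Z -> Z') (h0 : Z0 -> Z0').
Hypothesis hinj : injective h.
Hypothesis hsurj : forall z', exists z, h z = z'.
Hypothesis hpi : forall z, pi' (h z) = h0 (pi z).

Lemma sg_transport z : sigma pi' (h z) = h (sigma pi z).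
Proof.
apply: (sigma_char Hfib').
  by rewrite (inj_eq hinj) (sigma_neq Hfib).
by rewrite !hpi (sigma_pi Hfib).
Qed.

Lemma sec_transport w : w \in Csec pi -> h @: w \in Csec pi'.
Proof.
move/(secP Hfib) => H; apply/(secP Hfib') => z'.
have [z <-] := hsurj z'.
by rewrite sg_transport !(mem_imset _ _ hinj) H.
Qed.

Lemma dbl_transport w (o : {ffun 'I_#|Z| -> Z}) (o' : {ffun 'I_#|Z'| -> Z'})
  (HM : #|Z'| = #|Z|) (HN : #|Z0'| = #|Z0|) :
  w \in Csec pi -> o \in ordering Z -> doubled pi w o ->
  (forall (j : 'I_#|Z|) (j' : 'I_#|Z'|), val j = val j' -> o' j' = h (o j)) ->
  o' \in ordering Z' /\ doubled pi' (h @: w) o'.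
Proof.
move=> ws oo d Ho.
have Ho' j' : o' j' = h (o (cast_ord HM j')) by apply: Ho.
have [Da Db] := doubledP Hfib _ _ d.
split.
  rewrite inE; apply/injectiveP => a b; rewrite !Ho' => /hinj /(ordering_inj oo).
  exact: cast_ord_inj.
apply/(doubledP Hfib'); split => i Hi.
  by rewrite Ho' imset_f // Da //= -HN.
have Hi2 : cast_ord HM i < #|Z0| by rewrite /= -HN.
rewrite !Ho'.
have -> : cast_ord HM (sh Z0' i) = sh Z0 (cast_ord HM i).
  by apply: val_inj; rewrite /= (val_sh Hfib') // (val_sh Hfib) //= HN.
by rewrite Db // sg_transport.
Qed.


Lemma delta_transport w (z0 : Z) (d : {set {ffun 'I_#|Z| -> Z}})
  (d' : {set {ffun 'I_#|Z'| -> Z'}}) (HM : #|Z'| = #|Z|) (HN : #|Z0'| = #|Z0|) :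
  w \in Csec pi -> delta pi w = d -> d' \in Delta Z' ->
  (forall o, o \in d -> exists2 o', o' \in d' &
      forall (j : 'I_#|Z|) (j' : 'I_#|Z'|), val j = val j' -> o' j' = h (o j)) ->
  delta pi' (h @: w) = d'.
Proof.
move=> ws dw dD Hd.
have [o oo od] := dbl_exists Hfib z0 ws.
have : o \in d by rewrite -dw (delta_dbl Hfib ws oo od) orbit_refl.
case/Hd => o' o'd Ho.
have [oo' od'] := dbl_transport HM HN ws oo od Ho.
rewrite (delta_dbl Hfib' (sec_transport ws) oo' od').
by rewrite (orbit_Delta dD o'd).
Qed.

End Trans.

Lemma imsetC_bij (A B : finType) (h : A -> B) (S : {set A}) :
  bijective h -> h @: (~: S) = ~: (h @: S).
Proof.
case=> g hg gh; have hi : injective h by apply: can_inj hg.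
apply/setP => y; have [x ->] : exists x, y = h x by exists (g y).
by rewrite (mem_imset _ _ hi) !inE (mem_imset _ _ hi).
Qed.


Lemma ord2 (i : 'I_2) : i = ord0 \/ i = lift ord0 ord0.
Proof. by case: i => [[|[|//]]] Hi; [left|right]; apply: val_inj. Qed.

Lemma fib_of (T : topologicalType) (G : profinite_group T) (X X0 : finType)
  (act : T -> X -> X) (act0 : T -> X0 -> X0) (p : X -> X0) :
  covering_on G act [set: X] act0 [set: X0] p -> forall y, #|[set x | p x == y]| = 2.
Proof.
case=> _ _ _ _ H y; rewrite -(H y (in_setT y)); apply: eq_card => x; by rewrite !inE.
Qed.

Lemma HD_of (T : Type) (X : finType) (act : T -> X -> X) d : orientation act d ->
  Delta X \subset [set d ord0; d (lift ord0 ord0)] /\ d ord0 != d (lift ord0 ord0).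
Proof.
case=> dinj dim _; split.
  rewrite -dim; apply/subsetP => D /imsetP [i _ ->].
  by case: (ord2 i) => ->; rewrite !inE eqxx ?orbT.
by apply/eqP => /dinj.
Qed.

Lemma d_in_Delta (T : Type) (X : finType) (act : T -> X -> X) d i :
  orientation act d -> d i \in Delta X.
Proof. by case=> _ dim _; rewrite -dim imset_f. Qed.

Lemma Cin (X X0 : finType) (p : X -> X0) d (i : 'I_2) w :
  (w \in Ci p d i) = (w \in Csec p) && (delta p w == d i).
Proof. by rewrite [in LHS]inE. Qed.

Unset Implicit Arguments.

Theorem proposition2p2 (T : topologicalType) (G : profinite_group T) (n : nat)
  (Z Z0 : finType) (actZ : T -> Z -> Z) (actZ0 : T -> Z0 -> Z0) (pi : Z -> Z0)
  (dZ : 'I_2 -> {set {ffun 'I_#|Z| -> Z}}) :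
  (2 <= n)%N -> ~~ odd n ->
  covering_on G actZ [set: Z] actZ0 [set: Z0] pi -> #|Z0| = n ->
  orientation actZ dZ ->
  [/\ Csec pi = Ci pi dZ ord0 :|: Ci pi dZ (lift ord0 ord0)
        /\ [disjoint Ci pi dZ ord0 & Ci pi dZ (lift ord0 ord0)],
      (forall i : 'I_2,
        [/\ forall g w, w \in Ci pi dZ i -> act_set actZ g w \in Ci pi dZ i,
            forall w, w \in Ci pi dZ i -> (~: w \in Ci pi dZ i) /\ ~: w != w,
            covering_on G (act_set actZ) (Ci pi dZ i)
              (act_set (act_set actZ)) (Qi pi dZ i) (fun w => [set w; ~: w]) &
            #|Qi pi dZ i| = 2 ^ (n - 2)]),
      (forall (Z' Z0' : finType) (actZ' : T -> Z' -> Z') (actZ0' : T -> Z0' -> Z0')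
              (pi' : Z' -> Z0') (dZ' : 'I_2 -> {set {ffun 'I_#|Z'| -> Z'}})
              (f : Z -> Z') (f0 : Z0 -> Z0'),
         covering_on G actZ' [set: Z'] actZ0' [set: Z0'] pi' ->
         orientation actZ' dZ' ->
         oriented_iso actZ actZ0 pi dZ actZ' actZ0' pi' dZ' f f0 ->
         forall i : 'I_2,
         [/\ forall w, w \in Ci pi dZ i -> f @: w \in Ci pi' dZ' i,
             {in Ci pi dZ i &, injective (fun w : {set Z} => f @: w)},
             forall w', w' \in Ci pi' dZ' i -> exists2 w, w \in Ci pi dZ i & f @: w = w',
             forall g w, w \in Ci pi dZ i ->
               f @: act_set actZ g w = act_set actZ' g (f @: w) &
             forall w, f @: (~: w) = ~: (f @: w)]) &
      forall w w', w \in Csec pi -> w' \in Csec pi ->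
        ((w \in Ci pi dZ ord0) && (w' \in Ci pi dZ ord0))
        || ((w \in Ci pi dZ (lift ord0 ord0)) && (w' \in Ci pi dZ (lift ord0 ord0)))
        = ~~ odd #|w :&: w'|].
Proof.
move=> n2 nodd cov HN ori.
have Hfib := fib_of cov.
have [gaZ gaZ0 _ piE _] := cov.
have [y0 _] : exists y : Z0, True.
  have : 0 < #|Z0| by rewrite HN; apply: leq_trans n2.
  by case/card_gt0P => y _; exists y.
have [z0 _] := fiber_ne Hfib y0.
have [HD nd] := HD_of ori.
have nd' : dZ (lift ord0 ord0) != dZ ord0 by rewrite eq_sym.
have F1 w : w \in Csec pi -> delta pi w = dZ ord0 \/ delta pi w = dZ (lift ord0 ord0).
  by move=> ws; have := subsetP HD _ (delta_Delta Hfib z0 ws); rewrite !inE => /orP[]/eqP; auto.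
have act_inj' g : injective (actZ g).
  by move=> x y; apply: (act_inj gaZ); rewrite inE.
have act_bij g : bijective (actZ g) by apply: injF_bij.
have act_surj g : forall z', exists z, actZ g z = z'.
  by case: (act_bij g) => k _ kK z'; exists (k z'); apply: kK.
have piA g z : pi (actZ g z) = actZ0 g (pi z) by rewrite piE ?inE.
have [dinj dim dact] := ori.
have act_Ci g w i : w \in Ci pi dZ i -> act_set actZ g w \in Ci pi dZ i.
  rewrite !Cin => /andP [ws /eqP dw].
  rewrite /act_set (sec_transport Hfib Hfib (act_inj' g) (act_surj g) (piA g) ws) /=.
  rewrite (delta_transport Hfib Hfib (act_inj' g) (act_surj g) (piA g) z0 (erefl _) (erefl _) ws dw (d_in_Delta i ori)) //.
  move=> o od; exists (act_ord actZ g o).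
    by rewrite -[in X in _ \in X](dact g i); apply: imset_f.
  by move=> j j' /val_inj ->; rewrite ffunE.
have cn (x : {set Z}) : ~: x != x.
  apply/eqP => E; have := congr1 (fun A : {set Z} => z0 \in A) E.
  by rewrite inE; case: (z0 \in x).
have compl_Ci w i : w \in Ci pi dZ i -> (~: w \in Ci pi dZ i).
  rewrite !Cin => /andP [ws /eqP dw]; rewrite sec_compl //=.
  have := parity Hfib z0 HD (erefl _) ws (sec_compl Hfib ws).
  rewrite setDE setCK setIid (sec_card Hfib ws) HN nodd => /eqP <-.
  by rewrite dw.
have actC g (w : {set Z}) : act_set actZ g (~: w) = ~: act_set actZ g w.
  exact: imsetC_bij.
have act1 (w : {set Z}) : act_set actZ (gone G) w = w.
  rewrite /act_set (eq_imset _ (g := id)) ?imset_id //.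
  by case: gaZ => _ H1 _ _ z; rewrite H1 ?inE.
have actM g h (w : {set Z}) : act_set actZ (gmul G g h) w = act_set actZ g (act_set actZ h w).
  rewrite /act_set -imset_comp; apply: eq_imset => z /=.
  by case: gaZ => _ _ HM _; rewrite HM ?inE.
have actE g h : actZ g =1 actZ h -> act_set actZ g =1 act_set actZ h.
  by move=> E w; rewrite /act_set; apply: eq_imset.
have as2 g (q : {set {set Z}}) : act_set (act_set actZ) g q = act_set actZ g @: q by [].
split.
- split.
    apply/setP => w; rewrite in_setU !Cin; case ws: (w \in Csec pi) => //=.
    by case: (F1 w ws) => ->; rewrite eqxx ?orbT.
  rewrite -setI_eq0; apply/eqP/setP => w; rewrite in_setI in_set0 !Cin.
  apply/negP => /andP [/andP [_ /eqP ->] /andP [_ /eqP E]].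
  by move/eqP: nd; apply.
- move=> i; have pairE g w : act_set (act_set actZ) g [set w; ~: w] =
      [set act_set actZ g w; ~: act_set actZ g w].
    by rewrite /act_set imsetU1 imset_set1 -/(act_set actZ g (~: w)) actC.
  split.
  + by move=> g w; apply: act_Ci.
  + by move=> w wC; split; [apply: compl_Ci | apply: cn].
  + split.
    * split.
      - by move=> g w; apply: act_Ci.
      - by move=> w _; apply: act1.
      - by move=> g h w _; apply: actM.
      - move=> w _; apply: (open_stab (P := fun g => act_set actZ g w = w) gaZ).
        by move=> g h E; rewrite (actE _ _ E).
    * split.
      - move=> g q /imsetP [w wC ->]; rewrite pairE; apply: imset_f; exact: act_Ci.
      - move=> q _; rewrite as2 (eq_imset _ (g := id)) ?imset_id //.
      - move=> g h q _; rewrite !as2 -imset_comp; apply: eq_imset => w /=.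
        by rewrite actM.
      - move=> q _; apply: (open_stab (P := fun g => act_set (act_set actZ) g q = q) gaZ).
        move=> g h E; rewrite !as2 (eq_imset _ (actE _ _ E)) //.
    * by move=> w wC; apply: imset_f.
    * by move=> g w _; rewrite pairE.
    * move=> q /imsetP [w wC ->].
      have -> : [set x in Ci pi dZ i | [set x; ~: x] == [set w; ~: w]] = [set w; ~: w].
        apply/setP => x; rewrite [in LHS]in_set in_set2; apply/andP/idP => [[_ /eqP E]|H].
          by rewrite -in_set2 -E !inE eqxx.
        split; first by case/orP: H => /eqP ->; [exact: wC | exact: (compl_Ci w i wC)].
        by rewrite (pair_eq setCK (u := x)) ?inE.
      by rewrite cards2 eq_sym cn.
  + have Hc := card_pairs setCK cn (compl_Ci^~ i).
    have [c0 c1] := card_C Hfib z0 nd HD.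
    have H2 : (2 * (2 * #|Qi pi dZ i|) = 2 ^ n)%N.
      rewrite -HN -Hc; by case: (ord2 i) => ->.
    move: H2; case: n n2 {HN nodd} => [|[|m]] // _.
    by rewrite subn2 /= !expnS => /eqP; rewrite !eqn_pmul2l // => /eqP ->.
- move=> Z' Z0' actZ' actZ0' pi' dZ' f f0 cov' ori' [fbij f0bij fpi [fact f0act] fd] i.
  have Hfib' := fib_of cov'.
  have finj : injective f := bij_inj fbij.
  have [fi ff fif] := fbij.
  have [f0i f0f f0if] := f0bij.
  have fsurj : forall z', exists z, f z = z' by move=> z'; exists (fi z'); apply: fif.
  have HM : #|Z'| = #|Z| by rewrite (bij_eq_card fbij).
  have HN' : #|Z0'| = #|Z0| by rewrite (bij_eq_card f0bij).
  have fCi j w : w \in Ci pi dZ j -> f @: w \in Ci pi' dZ' j.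
    rewrite !Cin => /andP [ws /eqP dw].
    rewrite (sec_transport Hfib Hfib' finj fsurj fpi ws) /=.
    by rewrite (delta_transport Hfib Hfib' finj fsurj fpi z0 HM HN' ws dw (d_in_Delta j ori') (fd j)).
  split.
  + exact: fCi.
  + by move=> w1 w2 _ _; apply: imset_inj.
  + move=> w' w'C.
    have w'C2 := w'C; rewrite Cin in w'C2; case/andP: w'C2 => w's /eqP dw'.
    have fiinj : injective fi by apply: can_inj fif.
    have fisurj : forall z, exists z', fi z' = z by move=> z; exists (f z); apply: ff.
    have fipi z' : pi (fi z') = f0i (pi' z').
      by rewrite -{2}(fif z') fpi f0f.
    have fff : f @: (fi @: w') = w'.
      by rewrite -imset_comp (eq_imset _ (g := id)) ?imset_id // => x /=; rewrite fif.
    exists (fi @: w') => //.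
    have ws := sec_transport Hfib' Hfib fiinj fisurj fipi w's.
    have [j dj] : exists j, delta pi (fi @: w') = dZ j.
      by case: (F1 _ ws) => E; [exists ord0 | exists (lift ord0 ord0)].
    have H1 : fi @: w' \in Ci pi dZ j by rewrite Cin ws dj eqxx.
    have := fCi j _ H1; rewrite fff [w' \in _]Cin => /andP [_ /eqP].
    rewrite dw'; case: ori' => dinj' _ _ /dinj' ->.
    exact: H1.
  + by move=> g w _; rewrite /act_set -!imset_comp; apply: eq_imset => z /=; rewrite fact.
  + by move=> w; apply: imsetC_bij.
- move=> w w' ws ws'.
  have P := parity Hfib z0 HD (erefl _) ws ws'.
  have E : odd #|w :&: w'| = odd #|w :\: w'|.
    have := cardsID w' w; rewrite (sec_card Hfib ws) HN => /(congr1 odd).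
    rewrite oddD (negbTE nodd).
    by case: (odd #|w :&: w'|); case: (odd #|w :\: w'|).
  rewrite E -P !Cin ws ws' /=.
  by case: (F1 w ws) => ->; case: (F1 w' ws') => ->; rewrite ?eqxx ?(negbTE nd) ?(negbTE nd') //.
Qed.
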